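(* Let $q\in K$ with $|q-1|<\omega$. Let $\{\lambda_n\}_{n\in\mathbb{J}}$ be a family with $\lambda_n\in\mathbf{W}(\mathcal{O}_K)$ and phantom vectors $(\phi_{n,0},\phi_{n,1},\dots)$. Then the formal power series $$a^+(T):=\exp\Big(\sum_{n\in\mathbb{J}}\sum_{m\ge0}\phi_{n,m}\,(q^{np^m}-1)\,\frac{T^{np^m}}{p^m}\Big)\in K[[T]]$$ belongs to $\mathcal{E}_K$.
   Context: $K$ is a field of characteristic $0$, complete for a discrete non-archimedean absolute value, residue field of characteristic $p>0$; $\mathcal{O}_K$ its ring of integers; $\omega=|p|^{1/(p-1)}$. $\mathcal{E}_K$ is the ring of Laurent series $\sum a_iT^i$ over $K$ with $\sup|a_i|<\infty$ and $|a_i|\to0$ as $i\to-\infty$. $\mathbb{J}=\{n\ge1:p\nmid n\}$. $\mathbf{W}(\mathcal{O}_K)$ is the ring of $p$-typical Witt vectors over $\mathcal{O}_K$; the phantom vector of $\lambda=(\lambda_0,\lambda_1,\ldots)$ is $\phi_m=\sum_{i=0}^mp^i\lambda_i^{p^{m-i}}$. *)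

(* Defs.v *)
From HB Require Import structures.
From mathcomp Require Import all_boot all_order all_algebra.
From mathcomp Require Import reals exp.
Set Implicit Arguments. Unset Strict Implicit. Unset Printing Implicit Defensive.
Import Order.TTheory GRing.Theory Num.Theory.
Local Open Scope ring_scope.

Record complete_discrete_nonarch (R : realType) (K : fieldType) (abs : K -> R)
  : Prop := {
  abs_ge0 : forall x, 0 <= abs x;
  abs_eq0 : forall x, (abs x == 0) = (x == 0);
  absM : forall x y, abs (x * y) = abs x * abs y;
  abs_ultra : forall x y, abs (x + y) <= Num.max (abs x) (abs y);
  abs_discrete : exists pi : K, [/\ pi != 0, abs pi < 1 &
      forall x, x != 0 -> exists k : int, abs x = abs pi ^ k];
  abs_complete : forall u : nat -> K,
      (forall e : R, 0 < e -> exists N, forall m n, (N <= m)%N -> (N <= n)%N ->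
          abs (u m - u n) < e) ->
      exists l : K, forall e : R, 0 < e -> exists N, forall n, (N <= n)%N ->
          abs (u n - l) < e
}.

Definition omega (R : realType) (K : fieldType) (abs : K -> R) (p : nat) : R :=
  powR (abs p%:R) ((p.-1)%:R^-1).

Definition phantom (K : fieldType) (p : nat) (lam : nat -> K) (m : nat) : K :=
  \sum_(i < m.+1) (p ^ i)%N%:R * lam i ^+ (p ^ (m - i))%N.

Definition inJ (p n : nat) : bool := (0 < n)%N && ~~ (p %| n)%N.

(* Coefficient of T^N of the power series
   sum_{n in J} sum_{m >= 0} phi_{n,m} (q^(n p^m) - 1) T^(n p^m) / p^m.
   Only pairs with n p^m = N contribute, and those have n, m <= N. *)
Definition log_series (K : fieldType) (p : nat) (q : K)
    (lam : nat -> nat -> K) (N : nat) : K :=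
  \sum_(n < N.+1) \sum_(m < N.+1)
     if inJ p n && (n * p ^ m == N)%N then
       phantom p (lam n) m * (q ^+ (n * p ^ m) - 1) / (p ^ m)%N%:R
     else 0.

(* Formal exponential of a power series f (coefficient sequence) with f 0 = 0:
   the coefficient of T^N of exp f = sum_k f^k / k! only involves k <= N and
   the coefficients of f of index <= N. *)
Definition exp_series (K : fieldType) (f : nat -> K) (N : nat) : K :=
  (\sum_(k < N.+1) (k`!%:R)^-1 *: (\poly_(i < N.+1) f i) ^+ k)`_N.

Definition in_EK (R : realType) (K : fieldType) (abs : K -> R) (a : int -> K)
  : Prop :=
  (exists M : R, forall i, abs (a i) <= M) /\
  (forall e : R, 0 < e -> exists N : nat, forall i : int,
      i <= - (N%:Z) -> abs (a i) < e).

Definition laurent_of_ps (K : fieldType) (a : nat -> K) (i : int) : K :=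
  match i with Posz n => a n | Negz _ => 0 end.

(* Main.v *)
Require Import Defs.
From HB Require Import structures.
From mathcomp Require Import all_boot all_order all_algebra.
From mathcomp Require Import reals exp.
Import Order.TTheory GRing.Theory Num.Theory.
Local Open Scope ring_scope.
Set Implicit Arguments.

Lemma na_abs0 (R : realType) (K : fieldType) (abs : K -> R)
  (h : complete_discrete_nonarch abs) : abs 0 = 0.
Proof. by apply/eqP; rewrite (abs_eq0 h). Qed.

Lemma na_abs1 (R : realType) (K : fieldType) (abs : K -> R)
  (h : complete_discrete_nonarch abs) : abs 1 = 1.
Proof.
have h1 := absM h 1 1; rewrite mulr1 in h1.
have nz : abs 1 != 0 by rewrite (abs_eq0 h) oner_eq0.
by apply: (mulfI nz); rewrite mulr1 -h1.
Qed.

Lemma na_absN (R : realType) (K : fieldType) (abs : K -> R)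
  (h : complete_discrete_nonarch abs) x : abs (- x) = abs x.
Proof.
have hm : abs (-1) = 1.
  have e := absM h (-1) (-1); rewrite mulrNN mulr1 (na_abs1 h) in e.
  have g := Defs.abs_ge0 h (-1).
  have : (abs (-1) - 1) * (abs (-1) + 1) = 0 by rewrite -subr_sqr_1 expr2 -e subrr.
  move/eqP; rewrite mulf_eq0 subr_eq0 => /orP[/eqP//|].
  by rewrite gt_eqF // ltr_wpDl.
by rewrite -mulN1r (absM h) hm mul1r.
Qed.

Lemma abs_sum_le (R : realType) (K : fieldType) (abs : K -> R)
  (h : complete_discrete_nonarch abs) (I : Type) (r : seq I) (P : pred I)
  (F : I -> K) (B : R) :
  0 <= B -> (forall i, P i -> abs (F i) <= B) ->
  abs (\sum_(i <- r | P i) F i) <= B.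
Proof.
move=> B0 hF; apply: (big_ind (fun x => abs x <= B)) => //.
- by rewrite (na_abs0 h).
- move=> x y hx hy; apply: le_trans (abs_ultra h x y) _.
  by rewrite ge_max hx hy.
Qed.

Lemma na_abs_nat_le1 (R : realType) (K : fieldType) (abs : K -> R)
  (h : complete_discrete_nonarch abs) n : abs (n%:R : K) <= 1.
Proof.
elim: n => [|n IH]; first by rewrite (na_abs0 h).
rewrite -addn1 natrD; apply: le_trans (abs_ultra h _ _) _.
by rewrite ge_max IH (na_abs1 h) lexx.
Qed.

Lemma na_absX (R : realType) (K : fieldType) (abs : K -> R)
  (h : complete_discrete_nonarch abs) x n : abs (x ^+ n) = abs x ^+ n.
Proof.
elim: n => [|n IH]; first by rewrite !expr0 (na_abs1 h).
by rewrite !exprS (absM h) IH.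
Qed.

Lemma na_absV (R : realType) (K : fieldType) (abs : K -> R)
  (h : complete_discrete_nonarch abs) x : abs (x^-1) = (abs x)^-1.
Proof.
have [->|nz] := eqVneq x 0; first by rewrite invr0 (na_abs0 h) invr0.
have nz' : abs x != 0 by rewrite (abs_eq0 h).
by apply: (mulfI nz'); rewrite -(absM h) !divff // (na_abs1 h).
Qed.
From mathcomp Require Import zify.

Lemma legendre_aux (p n : nat) : (0 < p)%N -> forall K,
  (p.-1 * (\sum_(1 <= j < K.+1) n %/ p ^ j) + n %/ p ^ K <= n)%N.
Proof.
case: p => // p _ /=; elim=> [|K IH].
  by rewrite big_geq // expn0 divn1 muln0.
rewrite big_nat_recr //=.
have : (n %/ p.+1 ^ K.+1 * p.+1 <= n %/ p.+1 ^ K)%N.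
  by rewrite expnSr divnMA leq_divM.
move: IH; set S := (\sum_(_ <= _ < _) _)%N; set a := (n %/ _)%N; set b := (n %/ _)%N.
lia.
Qed.

Lemma legendre (p k : nat) : prime p -> (p.-1 * logn p k`! <= k)%N.
Proof.
move=> hp; rewrite logn_fact //.
exact: leq_trans (leq_addr _ _) (@legendre_aux p k (prime_gt0 hp) k).
Qed.

Lemma abs_coprime (R : realType) (K : fieldType) (abs : K -> R)
  (h : complete_discrete_nonarch abs) p m :
  abs (p%:R : K) < 1 -> coprime p m -> (0 < m)%N -> 1 <= abs (m%:R : K).
Proof.
move=> hp cop m0.
case: (egcdnP p m0) => km kn e _.
rewrite gcdnC (eqP cop) in e.
have hA : abs (km%:R * m%:R : K) = abs ((kn * p)%N%:R + 1).
  by rewrite -natrM e natrD.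
have hB : abs ((kn * p)%N%:R : K) < 1.
  rewrite natrM (absM h); apply: le_lt_trans hp.
  rewrite -{2}[abs p%:R]mul1r; apply: ler_wpM2r; first exact: Defs.abs_ge0.
  exact: na_abs_nat_le1.
have hC : 1 <= abs ((kn * p)%N%:R + 1 : K).
  have := abs_ultra h ((kn * p)%N%:R + 1) (- (kn * p)%N%:R).
  rewrite addrC addKr (na_abs1 h) (na_absN h) le_max => /orP[//|/(lt_le_trans hB)].
  by rewrite ltxx.
rewrite -hA (absM h) in hC; apply: le_trans hC _.
rewrite -{2}[abs m%:R]mul1r; apply: ler_wpM2r; first exact: Defs.abs_ge0.
exact: na_abs_nat_le1.
Qed.

Lemma abs_fact_lb (R : realType) (K : fieldType) (abs : K -> R)
  (h : complete_discrete_nonarch abs) p (r : R) k :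
  prime p -> abs (p%:R : K) < 1 -> 0 <= r -> r <= 1 -> r ^+ p.-1 <= abs (p%:R : K) ->
  r ^+ k <= abs (k`!%:R : K).
Proof.
move=> hp hp1 r0 r1 hr.
case: (pfactor_coprime hp (fact_gt0 k)) => m cop e.
have m0 : (0 < m)%N by move: (fact_gt0 k); rewrite e muln_gt0 => /andP[].
rewrite e natrM (absM h) natrX (na_absX h).
apply: le_trans (_ : abs (p%:R : K) ^+ logn p k`! <= _).
  apply: le_trans (_ : (r ^+ p.-1) ^+ logn p k`! <= _).
    by rewrite -exprM; apply: ler_wiXn2l => //; apply: legendre.
  by apply: lerXn2r => //; rewrite ?nnegrE ?exprn_ge0 ?Defs.abs_ge0.
rewrite -{1}[_ ^+ _]mul1r; apply: ler_wpM2r; first by rewrite exprn_ge0 ?Defs.abs_ge0.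
exact: (@abs_coprime _ _ _ h p m hp1 cop m0).
Qed.

Lemma abs_le1_of (R : realType) (K : fieldType) (abs : K -> R)
  (h : complete_discrete_nonarch abs) (y : K) : abs (y - 1) <= 1 -> abs y <= 1.
Proof.
move=> hy; have := abs_ultra h (y - 1) 1; rewrite subrK (na_abs1 h) => /le_trans; apply.
by rewrite ge_max hy lexx.
Qed.

Lemma pow_sub1 (R : realType) (K : fieldType) (abs : K -> R)
  (h : complete_discrete_nonarch abs) (y : K) n :
  abs (y - 1) <= 1 -> abs (y ^+ n - 1) <= abs (y - 1).
Proof.
move=> hy; rewrite subrX1 (absM h).
rewrite -{2}[abs (y - 1)]mulr1; apply: ler_wpM2l; first exact: Defs.abs_ge0.
apply: abs_sum_le => // i _; rewrite (na_absX h); apply: exprn_ile1.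
  exact: Defs.abs_ge0.
exact: abs_le1_of.
Qed.

Lemma step_p (R : realType) (K : fieldType) (abs : K -> R)
  (h : complete_discrete_nonarch abs) p (r s : R) (y : K) :
  prime p -> r <= 1 -> r ^+ p.-1 <= abs (p%:R : K) ->
  abs (y - 1) <= s -> s <= r -> abs (y ^+ p - 1) <= abs (p%:R : K) * s.
Proof.
move=> hp r1 hr hys hsr.
have s0 : 0 <= s := le_trans (Defs.abs_ge0 h _) hys.
have ap0 : 0 <= abs (p%:R : K) := Defs.abs_ge0 h _.
set x := y - 1; have -> : y = x + 1 by rewrite subrK.
set t := abs x.
have t0 : 0 <= t := Defs.abs_ge0 h _.
have t1 : t <= 1 by apply: le_trans hys (le_trans hsr r1).
rewrite exprD1n big_ord_recl /= expr0 bin0 mulr1n addrAC subrr add0r.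
apply: (abs_sum_le h); first exact: mulr_ge0.
move=> i _; rewrite -mulr_natr (absM h) (na_absX h) /bump /= add1n.
have : (i.+1 <= p)%N := ltn_ord i; rewrite leq_eqVlt => /orP[/eqP ei|lti].
  rewrite ei binn mulr1n (na_abs1 h) mulr1.
  have pe : p = p.-1.+1 by rewrite prednK // prime_gt0.
  rewrite [in X in t ^+ X]pe exprS mulrC.
  apply: ler_pM => //; first by rewrite exprn_ge0.
    apply: le_trans hr; apply: lerXn2r; rewrite ?nnegrE //.
      exact: le_trans s0 hsr.
    exact: le_trans hys hsr.
have : (p %| 'C(p, i.+1))%N by apply: prime_dvd_bin => //; rewrite ltn0Sn.
case/dvdnP => c ->; rewrite natrM (absM h) mulrC.
apply: ler_pM => //; first by rewrite mulr_ge0 ?Defs.abs_ge0.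
  by rewrite exprn_ge0.
  rewrite -{2}[abs (p%:R : K)]mul1r; apply: ler_wpM2r => //.
  exact: na_abs_nat_le1.
rewrite exprS; apply: le_trans hys; rewrite -[X in _ <= X]mulr1.
by apply: ler_wpM2l => //; apply: exprn_ile1.
Qed.

Lemma qpow (R : realType) (K : fieldType) (abs : K -> R)
  (h : complete_discrete_nonarch abs) p (q : K) :
  prime p -> abs (p%:R : K) < 1 -> abs (q - 1) <= 1 ->
  abs (q - 1) ^+ p.-1 <= abs (p%:R : K) ->
  forall m, abs (q ^+ (p ^ m) - 1) <= abs (p%:R : K) ^+ m * abs (q - 1).
Proof.
move=> hp hp1 r1 hr; elim=> [|m IH]; first by rewrite expn0 expr1 expr0 mul1r.
rewrite expnSr exprM exprS -mulrA.
apply: (@step_p _ _ _ h p (abs (q - 1)) _ _ hp r1 hr IH).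
rewrite -[X in _ <= X]mul1r; apply: ler_wpM2r; first exact: Defs.abs_ge0.
by apply: exprn_ile1; rewrite ?Defs.abs_ge0 // ltW.
Qed.

Lemma phantom_le1 (R : realType) (K : fieldType) (abs : K -> R)
  (h : complete_discrete_nonarch abs) (p : nat) (lam : nat -> K) m :
  (forall i, abs (lam i) <= 1) -> abs (Defs.phantom p lam m) <= 1.
Proof.
move=> hl; apply: (abs_sum_le h) => // i _.
rewrite (absM h) (na_absX h); apply: le_trans (_ : 1 * 1 <= 1); last by rewrite mulr1.
apply: ler_pM; rewrite ?exprn_ge0 ?Defs.abs_ge0 //.
  exact: na_abs_nat_le1.
by apply: exprn_ile1; rewrite ?Defs.abs_ge0.
Qed.

Lemma log_series_le (R : realType) (K : fieldType) (abs : K -> R)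
  (h : complete_discrete_nonarch abs) p (q : K) lam :
  prime p -> [pchar K] =i pred0 -> abs (p%:R : K) < 1 -> abs (q - 1) <= 1 ->
  abs (q - 1) ^+ p.-1 <= abs (p%:R : K) ->
  (forall n i, inJ p n -> abs (lam n i) <= 1) ->
  forall N, abs (log_series p q lam N) <= abs (q - 1).
Proof.
move=> hp hc hp1 r1 hr hl N.
have r0 : 0 <= abs (q - 1) := Defs.abs_ge0 h _.
apply: (abs_sum_le h) => // n _; apply: (abs_sum_le h) => // m _.
case: ifP => [/andP[hJ _]|_]; last by rewrite (na_abs0 h).
have pnz : (p%:R : K) != 0.
  have := hc p; rewrite !inE hp /= => ->; done.
have apnz : abs (p%:R : K) != 0 by rewrite (abs_eq0 h).
set ap := abs (p%:R : K).
have hq := qpow h p q hp hp1 r1 hr m.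
have hq1 : abs (q ^+ (p ^ m) - 1) <= 1.
  apply: le_trans hq _; apply: le_trans (_ : 1 * 1 <= 1); last by rewrite mulr1.
  apply: ler_pM; rewrite ?exprn_ge0 ?Defs.abs_ge0 //.
  by apply: exprn_ile1; rewrite ?Defs.abs_ge0 // ltW.
rewrite mulnC exprM (absM h) (absM h) (na_absV h) natrX (na_absX h).
apply: le_trans (_ : 1 * (ap ^+ m * abs (q - 1)) * (ap ^+ m)^-1 <= _).
  apply: ler_wpM2r; first by rewrite invr_ge0 exprn_ge0 ?Defs.abs_ge0.
  apply: ler_pM; rewrite ?Defs.abs_ge0 //.
    by apply: (phantom_le1 h) => i; apply: hl.
  exact: le_trans (pow_sub1 h (q ^+ (p ^ m)) n hq1) hq.
rewrite mul1r mulrAC divff ?mul1r //.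
by rewrite expf_neq0.
Qed.

Lemma poly_pow_le (R : realType) (K : fieldType) (abs : K -> R)
  (h : complete_discrete_nonarch abs) (P : {poly K}) (r : R) :
  0 <= r -> (forall i, abs P`_i <= r) -> forall k j, abs (P ^+ k)`_j <= r ^+ k.
Proof.
move=> r0 hP; elim=> [|k IH] j.
  rewrite expr0 coef1; case: (j == 0%N); rewrite ?(na_abs1 h) ?(na_abs0 h) //.
rewrite exprS coefM exprS; apply: (abs_sum_le h); first by rewrite mulr_ge0 ?exprn_ge0.
by move=> i _; rewrite (absM h); apply: ler_pM; rewrite ?Defs.abs_ge0.
Qed.

Unset Implicit Arguments.

Theorem lemma5p4p4 (R : realType) (K : fieldType) (abs : K -> R) (p : nat)
  (hp : prime p)
  (hchar0 : [pchar K] =i pred0)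
  (habs : complete_discrete_nonarch abs)
  (hres : abs p%:R < 1)
  (q : K) (hq : abs (q - 1) < omega abs p)
  (lam : nat -> nat -> K)
  (hlam : forall n i, inJ p n -> abs (lam n i) <= 1) :
  in_EK abs (laurent_of_ps (exp_series (log_series p q lam))).
Proof.
have h := habs.
set r := abs (q - 1).
have r0 : 0 <= r := Defs.abs_ge0 h _.
have pnz : (p%:R : K) != 0.
  have := hchar0 p; rewrite !inE hp /= => ->; done.
have ap0 : 0 <= abs (p%:R : K) := Defs.abs_ge0 h _.
have hom : omega abs p ^+ p.-1 = abs (p%:R : K).
  have pnz' : (p.-1%:R : R) != 0.
    by rewrite pnatr_eq0; move: (prime_gt1 hp); case: (p) => [|[|]].
  rewrite /omega -powR_mulrn ?powR_ge0 // -powRrM mulVf // powRr1 //.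
have hr' : r ^+ p.-1 < abs (p%:R : K).
  rewrite -hom ltrXn2r //.
  by move: (prime_gt1 hp); case: (p) => [|[|]].
have hr := ltW hr'.
have r1 : r <= 1.
  rewrite leNgt; apply/negP => r1.
  have := exprn_ege1 p.-1 (ltW r1).
  by rewrite leNgt (lt_trans hr' hres).
have hc : has_pchar0 K := hchar0.
split.
  exists 1 => -[N|n] /=; last by rewrite (na_abs0 h) ler01.
  rewrite /exp_series coef_sum; apply: (abs_sum_le h) => // k _.
  rewrite coefZ (absM h) (na_absV h).
  set P := \poly_(_ < _) _.
  have hP : forall i, abs P`_i <= r.
    move=> i; rewrite coef_poly; case: ifP => _; last by rewrite (na_abs0 h).
    exact: (log_series_le h).
  have hk := poly_pow_le h P r r0 hP k N.
  have hf := abs_fact_lb h p r k hp hres r0 r1 hr.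
  have fnz : abs (k`!%:R : K) != 0.
    by rewrite (abs_eq0 h) (pcharf0P _).1 // -lt0n fact_gt0.
  apply: le_trans (_ : (abs (k`!%:R : K))^-1 * abs (k`!%:R : K) <= 1).
    apply: ler_wpM2l; first by rewrite invr_ge0 Defs.abs_ge0.
    exact: le_trans hk hf.
  by rewrite mulVf.
move=> e e0; exists 1%N => -[N|n] hi /=; last by rewrite (na_abs0 h).
exfalso; move: hi; lia.
Qed.
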